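(* Let $k$ be a field of characteristic different from $2$ containing an element $i$ with $i^2=-1$, and let $k(u,v)$ be the rational function field in two variables. Then in the Brauer group $\mathrm{Br}(k(u,v))$ one has the equality of quaternion classes $$\big(uv(u^2-1)(v^2-1),\; u(v^2-1)(v^2-u^2)\big) = (u,v).$$ Equivalently, the conics in $\mathbf{P}^2_{k(u,v)}$ given in homogeneous coordinates $S,T,R$ by $$v(v^2-1)S^2 - u(u^2-1)T^2 + uv(u^2-v^2)R^2 = 0 \quad\text{and}\quad S^2 - uT^2 - vR^2 = 0$$ are isomorphic over $k(u,v)$.
   Context: For a field $F$ of characteristic $\neq 2$ and $a,b\in F^\times$, $(a,b)\in\mathrm{Br}(F)$ denotes the class of the quaternion algebra with generators $x,y$ and relations $x^2=a$, $y^2=b$, $xy=-yx$. *)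

(* Defs.v *)
From HB Require Import structures.
From mathcomp Require Import all_boot all_order all_algebra.
Set Implicit Arguments. Unset Strict Implicit. Unset Printing Implicit Defensive.
Import GRing.Theory.
Local Open Scope ring_scope.

(* The quaternion algebra (a,b) over a field K, realised concretely on K^4:
   (c0,c1,c2,c3) stands for c0 + c1 x + c2 y + c3 xy, with
   x^2 = a, y^2 = b, xy = -yx. *)
Definition quat (K : fieldType) := (K * K * K * K)%type.

Definition qone (K : fieldType) : quat K := (1, 0, 0, 0).

Definition qadd (K : fieldType) (p q : quat K) : quat K :=
  let: (p0, p1, p2, p3) := p in let: (q0, q1, q2, q3) := q in
  (p0 + q0, p1 + q1, p2 + q2, p3 + q3).

Definition qscale (K : fieldType) (k : K) (p : quat K) : quat K :=
  let: (p0, p1, p2, p3) := p in (k * p0, k * p1, k * p2, k * p3).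

Definition qmul (K : fieldType) (a b : K) (p q : quat K) : quat K :=
  let: (p0, p1, p2, p3) := p in let: (q0, q1, q2, q3) := q in
  (p0 * q0 + a * p1 * q1 + b * p2 * q2 - a * b * p3 * q3,
   p0 * q1 + p1 * q0 - b * p2 * q3 + b * p3 * q2,
   p0 * q2 + p2 * q0 + a * p1 * q3 - a * p3 * q1,
   p0 * q3 + p3 * q0 + p1 * q2 - p2 * q1).

Definition quat_alg_iso (K : fieldType) (a b c d : K) (f : quat K -> quat K) :=
  [/\ forall (k : K) (p q : quat K), f (qadd p (qscale k q)) = qadd (f p) (qscale k (f q)),
      bijective f,
      f (qone K) = qone K &
      forall p q : quat K, f (qmul a b p q) = qmul c d (f p) (f q)].

(* Equality of the classes (a,b) = (c,d) in Br(K): since both algebras are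
   central simple of dimension 4, this is isomorphism of K-algebras. *)
Definition quat_class_eq (K : fieldType) (a b c d : K) : Prop :=
  exists f : quat K -> quat K, quat_alg_iso a b c d f.

Definition ratfun2 (F : fieldType) := {fraction {poly {poly F}}}.
Definition var_u (F : fieldType) : ratfun2 F := (@FracField.tofrac _ (('X : {poly F})%:P)).
Definition var_v (F : fieldType) : ratfun2 F := (@FracField.tofrac _ ('X : {poly {poly F}})).

(* Main.v *)
Require Import Defs.
From HB Require Import structures.
From mathcomp Require Import all_boot all_order all_algebra.
From mathcomp Require Import ring.
Set Implicit Arguments. Unset Strict Implicit.
Import GRing.Theory.
Local Open Scope ring_scope.

Definition qemb (K : fieldType) (c d : K) (X Y : quat K) (p : quat K) : quat K :=
  let: (p0, p1, p2, p3) := p in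
  qadd (qadd (qadd (qscale p0 (qone K)) (qscale p1 X)) (qscale p2 Y))
       (qscale p3 (qmul c d X Y)).

Ltac qdes := repeat match goal with
  | p : quat _ |- _ => let a := fresh "a" in let b := fresh "b" in
       let c := fresh "c" in let d := fresh "d" in case: p => [[[a b] c] d]
  end.

Lemma qmulA (K : fieldType) (c d : K) p q r :
  qmul c d (qmul c d p q) r = qmul c d p (qmul c d q r).
Proof. qdes; rewrite /qmul; congr (_,_,_,_); ring. Qed.

Lemma qmulZl (K : fieldType) (c d k : K) p q :
  qmul c d (qscale k p) q = qscale k (qmul c d p q).
Proof. qdes; rewrite /qmul /qscale; congr (_,_,_,_); ring. Qed.

Lemma qmulZr (K : fieldType) (c d k : K) p q :
  qmul c d p (qscale k q) = qscale k (qmul c d p q).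
Proof. qdes; rewrite /qmul /qscale; congr (_,_,_,_); ring. Qed.

Lemma qmul1l (K : fieldType) (c d : K) q : qmul c d (qone K) q = q.
Proof. qdes; rewrite /qmul /qone /=; congr (_,_,_,_); ring. Qed.

Lemma qmul1r (K : fieldType) (c d : K) q : qmul c d q (qone K) = q.
Proof. qdes; rewrite /qmul /qone /=; congr (_,_,_,_); ring. Qed.

Lemma qscaleA (K : fieldType) (k l : K) q : qscale k (qscale l q) = qscale (k * l) q.
Proof. qdes; rewrite /qscale; congr (_,_,_,_); ring. Qed.

Lemma qemb_lin (K : fieldType) (c d : K) X Y k p q :
  qemb c d X Y (qadd p (qscale k q)) = qadd (qemb c d X Y p) (qscale k (qemb c d X Y q)).
Proof. qdes; rewrite /qemb /qadd /qscale /qmul /=; congr (_,_,_,_); ring. Qed.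

Lemma qemb_one (K : fieldType) (c d : K) X Y : qemb c d X Y (qone K) = qone K.
Proof. qdes; rewrite /qemb /qadd /qscale /qmul /qone /=; congr (_,_,_,_); ring. Qed.

Lemma qexpand (K : fieldType) (c d : K) (X Y Z : quat K) (x0 x1 x2 x3 y0 y1 y2 y3 : K) :
  qmul c d (qadd (qadd (qadd (qscale x0 (qone K)) (qscale x1 X)) (qscale x2 Y)) (qscale x3 Z))
           (qadd (qadd (qadd (qscale y0 (qone K)) (qscale y1 X)) (qscale y2 Y)) (qscale y3 Z)) =
  qadd (qadd (qadd (qadd (qadd (qadd (qadd (qadd (qadd (qadd (qadd (qadd (qadd (qadd (qadd
    (qscale (x0*y0) (qmul c d (qone K) (qone K))) (qscale (x0*y1) (qmul c d (qone K) X)))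
    (qscale (x0*y2) (qmul c d (qone K) Y))) (qscale (x0*y3) (qmul c d (qone K) Z)))
    (qscale (x1*y0) (qmul c d X (qone K)))) (qscale (x1*y1) (qmul c d X X)))
    (qscale (x1*y2) (qmul c d X Y))) (qscale (x1*y3) (qmul c d X Z)))
    (qscale (x2*y0) (qmul c d Y (qone K)))) (qscale (x2*y1) (qmul c d Y X)))
    (qscale (x2*y2) (qmul c d Y Y))) (qscale (x2*y3) (qmul c d Y Z)))
    (qscale (x3*y0) (qmul c d Z (qone K)))) (qscale (x3*y1) (qmul c d Z X)))
    (qscale (x3*y2) (qmul c d Z Y))) (qscale (x3*y3) (qmul c d Z Z)).
Proof. qdes; rewrite /qmul /qadd /qscale /qone /=; congr (_,_,_,_); ring. Qed.

Lemma class_of_XY (K : fieldType) (a b c d : K) (X Y : quat K) (g : quat K -> quat K) :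
  qmul c d X X = qscale a (qone K) -> qmul c d Y Y = qscale b (qone K) ->
  qmul c d Y X = qscale (-1) (qmul c d X Y) ->
  cancel (qemb c d X Y) g -> cancel g (qemb c d X Y) -> quat_class_eq a b c d.
Proof.
move=> hXX hYY hYX c1 c2; exists (qemb c d X Y); split.
- exact: qemb_lin.
- by exists g.
- exact: qemb_one.
set Z := qmul c d X Y.
have hXZ : qmul c d X Z = qscale a Y by rewrite /Z -qmulA hXX qmulZl qmul1l.
have hZY : qmul c d Z Y = qscale b X by rewrite /Z qmulA hYY qmulZr qmul1r.
have hYZ : qmul c d Y Z = qscale (-b) X.
  by rewrite /Z -qmulA hYX qmulZl hZY qscaleA mulN1r.
have hZX : qmul c d Z X = qscale (-a) Y.
  by rewrite /Z qmulA hYX qmulZr -/Z hXZ qscaleA mulN1r.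
have hZZ : qmul c d Z Z = qscale (-(a*b)) (qone K).
  by rewrite {1}/Z qmulA hYZ qmulZr hXX qscaleA; congr (qscale _ _); ring.
move=> p q.
have E : forall p : quat K, qemb c d X Y p = let: (p0,p1,p2,p3) := p in
  qadd (qadd (qadd (qscale p0 (qone K)) (qscale p1 X)) (qscale p2 Y)) (qscale p3 Z).
  by case=> [[[? ?] ?] ?].
rewrite !E; case: p => [[[p0 p1] p2] p3]; case: q => [[[q0 q1] q2] q3].
rewrite qexpand hXX hYY hYX hXZ hZY hYZ hZX hZZ !qmul1l !qmul1r -/Z.
rewrite /Z; clear; qdes; rewrite /qmul /qadd /qscale /qone /=; congr (_,_,_,_); ring.
Qed.

Lemma key (K : fieldType) (u v I : K) : I ^+ 2 = -1 -> u != 0 -> v != 0 ->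
  u ^+ 2 - 1 != 0 -> v ^+ 2 - 1 != 0 -> v ^+ 2 - u ^+ 2 != 0 ->
  quat_class_eq (u * v * (u ^+ 2 - 1) * (v ^+ 2 - 1))
                (u * (v ^+ 2 - 1) * (v ^+ 2 - u ^+ 2)) u v.
Proof.
move=> hI nu nv nu2 nv2 nvu.
pose a := u * v * (u ^+ 2 - 1) * (v ^+ 2 - 1).
pose b := u * (v ^+ 2 - 1) * (v ^+ 2 - u ^+ 2).
have na : a != 0 by exact: (mulf_neq0 (mulf_neq0 (mulf_neq0 nu nv) nu2) nv2).
have nb : b != 0 by exact: (mulf_neq0 (mulf_neq0 nu nv2) nvu).
pose X : quat K := (0, v*(1+I)*(1+u), u*(1-I)*(1+v), u - v - I + I*u*v).
pose Y : quat K := (0, -(I*v + v^+2 + u + I*u*v), -((1-I)*u*(1+v)), (1+I)*(v-u)).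
pose sc := fun q : quat K => let: (q0,_,_,_) := q in q0.
pose g := fun q : quat K => (sc q, sc (qmul u v q X) / a, sc (qmul u v q Y) / b,
   - sc (qmul u v q (qmul u v X Y)) / (a * b)).
apply: (@class_of_XY _ a b u v X Y g).
- (rewrite /X /a /qmul /qscale /qone; cbv beta iota; congr (_,_,_,_); ring: hI).
- (rewrite /Y /b /qmul /qscale /qone; cbv beta iota; congr (_,_,_,_); ring: hI).
- (rewrite /X /Y /qmul /qscale /qone; cbv beta iota; congr (_,_,_,_); ring: hI).
- case=> [[[q0 q1] q2] q3].
  (rewrite /qemb /g /sc /X /Y /qmul /qadd /qscale /qone; cbv beta iota; congr (_,_,_,_); rewrite /a /b; field: hI; rewrite ?nu ?nv ?nu2 ?nv2 ?nvu //).
- case=> [[[q0 q1] q2] q3].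
  (rewrite /qemb /g /sc /X /Y /qmul /qadd /qscale /qone; cbv beta iota; congr (_,_,_,_); rewrite /a /b; field: hI; rewrite ?nu ?nv ?nu2 ?nv2 ?nvu //).
Qed.

Unset Implicit Arguments. Set Strict Implicit.

Lemma nz_horner (R : comNzRingType) (p : {poly R}) x : p.[x] != 0 -> p != 0.
Proof. by apply: contra => /eqP ->; rewrite horner0. Qed.

Theorem mainTheorem2 (F : fieldType) (h2 : (2%:R : F) != 0)
  (hi : exists i : F, i ^+ 2 = -1) :
  let u := var_u F in let v := var_v F in
  quat_class_eq (u * v * (u ^+ 2 - 1) * (v ^+ 2 - 1))
                (u * (v ^+ 2 - 1) * (v ^+ 2 - u ^+ 2))
                u v.
Proof.
case: hi => i hi u v.
pose tf := @FracField.tofrac {poly {poly F}}.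
pose I : ratfun2 F := tf ((i%:P)%:P).
have hI : I ^+ 2 = -1.
  by rewrite /I /tf -(rmorphXn (@FracField.tofrac _)) expr2 -!polyCM -expr2 hi !polyCN !polyC1 rmorphN1.
have nu : u != 0.
  rewrite /u /var_u tofrac_eq0; apply: (@nz_horner _ _ 0); rewrite hornerC.
  by apply: (@nz_horner _ _ 1); rewrite hornerX oner_eq0.
have nv : v != 0.
  rewrite /v /var_v tofrac_eq0; apply: (@nz_horner _ _ 1%:P); rewrite hornerX.
  by rewrite polyC_eq0 oner_eq0.
have nu2 : u ^+ 2 - 1 != 0.
  have -> : u ^+ 2 - 1 = tf ((('X : {poly F}) ^+ 2 - 1)%:P).
    by rewrite /u /var_u /tf rmorphB rmorphXn rmorph1 /= rmorphB rmorphXn rmorph1.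
  rewrite tofrac_eq0 polyC_eq0; apply: (@nz_horner _ _ 0).
  by rewrite !hornerE expr0n /= sub0r oppr_eq0 oner_eq0.
have nv2 : v ^+ 2 - 1 != 0.
  have -> : v ^+ 2 - 1 = tf (('X : {poly {poly F}}) ^+ 2 - 1).
    by rewrite /v /var_v /tf rmorphB rmorphXn rmorph1.
  rewrite tofrac_eq0; apply: (@nz_horner _ _ 0).
  by rewrite !hornerE expr0n /= sub0r oppr_eq0 oner_eq0.
have nvu : v ^+ 2 - u ^+ 2 != 0.
  have -> : v ^+ 2 - u ^+ 2 = tf (('X : {poly {poly F}}) ^+ 2 - ('X%:P) ^+ 2).
    by rewrite /v /var_v /u /var_u /tf rmorphB !rmorphXn.
  rewrite tofrac_eq0; apply: (@nz_horner _ _ 0).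
  rewrite !hornerE expr0n /= sub0r oppr_eq0.
  by apply: (@nz_horner _ _ 1); rewrite !hornerE expr1n oner_eq0.
exact: (key hI nu nv nu2 nv2 nvu).
Qed.
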